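(* Let $G=(N,E)$ be a finite DAG with influential set $S^{inf.}(G)=\{s_1,\dots,s_m\}$. Then $s_1$ has no out-edges in $G$, and $s_1$ has the maximum progeny in $G$, i.e. $p_{s_1}=\max_{i\in N}p_i$.
   Context: In a DAG $G=(N,E)$ with $N=\{1,\dots,n\}$, $P_i$ is the set of nodes having a directed path to $i$ (including $i$), and $p_i=|P_i|$. Write $p_i\succ p_j$ if $p_i>p_j$, or $p_i=p_j$ and $i<j$. Node $i$ is influential if, in the graph obtained from $G$ by deleting all out-edges of $i$, $p_i\succ p_j$ holds for all $j\ne i$ (progeny measured in that modified graph). The influential set $S^{inf.}(G)=\{s_1,\dots,s_m\}$ consists of all influential nodes, indexed so that $p_{s_1}\succ p_{s_2}\succ\cdots\succ p_{s_m}$, with progeny measured in $G$. *)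

(* Defs.v *)
From mathcomp Require Import all_boot.
Set Implicit Arguments. Unset Strict Implicit. Unset Printing Implicit Defensive.

(* Nodes N = {1..n} are represented by 'I_n (node k+1 <-> ordinal k; the
   order on indices is preserved).  A directed graph is an edge relation
   e : rel 'I_n (e x y = edge x -> y). *)

Definition acyclic n (e : rel 'I_n) : Prop :=
  forall x y, e x y -> ~~ connect e y x.

Definition progeny_set n (e : rel 'I_n) (i : 'I_n) : {set 'I_n} :=
  [set j | connect e j i].
Definition progeny n (e : rel 'I_n) (i : 'I_n) : nat := #|progeny_set e i|.

Definition succ_prog n (pi : nat) (i : 'I_n) (pj : nat) (j : 'I_n) : bool :=
  (pj < pi) || ((pi == pj) && (i < j)).

Definition del_out n (e : rel 'I_n) (i : 'I_n) : rel 'I_n :=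
  fun x y => (x != i) && e x y.

Definition influential n (e : rel 'I_n) (i : 'I_n) : bool :=
  [forall j, (j != i) ==>
     succ_prog (progeny (del_out e i) i) i (progeny (del_out e i) j) j].

Definition first_influential n (e : rel 'I_n) (s : 'I_n) : Prop :=
  influential e s /\
  forall t, influential e t -> t != s -> succ_prog (progeny e s) s (progeny e t) t.

(* Main.v *)
Require Import Defs.
From mathcomp Require Import all_boot.

Theorem mainTheorem5 (n : nat) (e : rel 'I_n) (s : 'I_n) :
  acyclic e -> first_influential e s ->
  (forall j, ~~ e s j) /\ progeny e s = \max_(i < n) progeny e i.
Proof.
move=> acyc [_ fst].
set M := \max_(i < n) progeny e i.
have leM : forall j, progeny e j <= M by move=> j; exact: leq_bigmax.
have [i0 Hi0'] : {i0 : 'I_n | M = progeny e i0}.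
  by apply: eq_bigmax; rewrite card_ord; exact: (leq_ltn_trans (leq0n _) (ltn_ord s)).
have Hi0 : progeny e i0 = M by rewrite Hi0'.
case: (@arg_minnP _ i0 (fun i => progeny e i == M) (fun i : 'I_n => nat_of_ord i) (introT eqP Hi0)) => t /eqP Ht tmin.
have noout : forall u, ~~ e t u.
  move=> u; apply/negP => etu.
  have : progeny e t < progeny e u.
    apply: proper_card; apply/properP; split.
      apply/subsetP => x; rewrite !inE => cx.
      exact: (connect_trans cx (connect1 etu)).
    exists u; first by rewrite inE connect0.
    by rewrite inE; apply: acyc.
  by rewrite Ht ltnNge leM.
have Hdel : forall i, progeny (del_out e t) i = progeny e i.
  move=> i; rewrite /progeny /progeny_set; apply: eq_card => x.
  rewrite !inE; apply: eq_connect => a b; rewrite /del_out.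
  by case: eqP => // ->; rewrite (negbTE (noout b)).
have succ_t : forall j, j != t -> succ_prog (progeny e t) t (progeny e j) j.
  move=> j jt; rewrite /succ_prog Ht.
  rewrite ltn_neqAle leM andbT.
  case: (progeny e j =P M) => [hj|] //=.
  rewrite hj eqxx /= ltn_neqAle tmin ?hj ?eqxx // andbT.
  by apply/negP => /eqP /val_inj ht; rewrite ht eqxx in jt.
have inf_t : influential e t.
  apply/forallP => j; apply/implyP => jt; rewrite !Hdel; exact: succ_t.
have ts : t = s.
  apply/eqP; apply/negPn/negP => ts.
  move: (fst t inf_t ts); rewrite /succ_prog Ht ltnNge leM /=.
  case/andP => /eqP hs st.
  by move: (tmin s (introT eqP hs)); rewrite leqNgt st.
by subst t; split.
Qed.
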